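(* Let $A\in\mathbb{C}$ and expand $$\exp\Big(u\Big(\frac{\mathcal{S}(u\hbar z\partial_z)}{\mathcal{S}(\hbar z\partial_z)}-1\Big)\log(z-A)\Big)=\sum_{k\ge0}\hbar^{2k}c_{2k}(u,z).$$ Then $c_0(u,z)=1$, and for $k\ge1$, writing the Laurent expansion in $z-A$ as $c_{2k}(u,z)=\sum_{l\in\mathbb{Z}}d_{2k,l}(u)(z-A)^{-l}$, for every $l>0$ one has $d_{2k,l}(u)=(u+1)u(u-1)\cdots(u-l+1)\,p_{2k,l}(u)$ for some polynomial $p_{2k,l}(u)\in\mathbb{C}[u]$.
   Context: $\mathcal{S}(w)=(e^{w/2}-e^{-w/2})/w$; the operator $\mathcal{S}(u\hbar z\partial_z)/\mathcal{S}(\hbar z\partial_z)$ is understood as its power series in $\hbar z\partial_z$ (coefficients polynomial in $u$), applied termwise to $\log(z-A)$. *)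

(* Defs.v *)
From HB Require Import structures.
From mathcomp Require Import all_boot all_order all_algebra.
From mathcomp Require Export reals complex.
Set Implicit Arguments. Unset Strict Implicit. Unset Printing Implicit Defensive.
Import Order.TTheory GRing.Theory Num.Theory.
Local Open Scope ring_scope.

(* Encoding:
   - the inner polynomial variable 'X : {poly K} is the parameter u;
   - the outer polynomial variable 'X : {poly {poly K}} is w := (z - A)^{-1};
   - a formal series in hbar^2 is handled coefficientwise / by truncation. *)

Section Defs.
Variable K : fieldType.

(* Coefficients of S(w) = (e^{w/2}-e^{-w/2})/w = \sum_m sS m * w^(2m). *)
Definition sS (m : nat) : K := ((4 ^ m * (2 * m).+1 `!)%N%:R)^-1.

(* q j = coefficient of w^(2j) in S(u w)/S(w), a polynomial in u:
   \sum_(i <= j) sS i * q (j - i) = sS j * u^(2j). *)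
Fixpoint qseq (n : nat) : seq {poly K} :=
  match n with
  | 0 => [:: 1]
  | n'.+1 => let s := qseq n' in
      rcons s (sS n'.+1 *: 'X^(2 * n'.+1)
               - \sum_(1 <= i < n'.+2) sS i *: nth 0 s (n'.+1 - i))
  end.

Definition qS (j : nat) : {poly K} := nth 0 (qseq j) j.

(* The ring of Laurent polynomials in (z - A) with only non-positive powers,
   with coefficients in K[u]: element p represents \sum_l p`_l (z-A)^{-l}. *)
Definition LP := {poly {poly K}}.

(* the operator z d/dz: with w = (z-A)^{-1}, z dw/dz = -w - A w^2. *)
Definition zdz (A : K) (p : LP) : LP := - ('X + (A%:P)%:P * 'X^2) * p^`().

(* (z d/dz)^n log(z - A) for n >= 1, using z d/dz log(z-A) = z/(z-A) = 1 + A w. *)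
Definition Dlog (A : K) (n : nat) : LP := iter n.-1 (zdz A) (1 + (A%:P)%:P * 'X).

(* hbar^(2j) coefficient of  u (S(u hbar D)/S(hbar D) - 1) log(z-A). *)
Definition expo (A : K) (j : nat) : LP :=
  if j is 0 then 0 else ('X : {poly K})%:P * (qS j)%:P * Dlog A (2 * j).

(* c_{2k}(u,z): hbar^(2k) coefficient of exp(expo), computed from the truncation
   of expo (a polynomial in h := hbar^2) to degree k; since expo has no h^0 term,
   only the powers n <= k of the exponent contribute. *)
Definition ctrunc (A : K) (k : nat) : {poly LP} := \poly_(j < k.+1) expo A j.

Definition c (A : K) (k : nat) : LP :=
  (\sum_(n < k.+1) ((n`!%:R : K)^-1)%:P%:P%:P * (ctrunc A k) ^+ n)`_k.

Definition d (A : K) (k l : nat) : {poly K} := (c A k)`_l.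

Definition fallprod (l : nat) : {poly K} := \prod_(i < l.+1) ('X - (i%:R - 1)%:P).

End Defs.

(* Main.v *)
Require Import Defs.
From mathcomp Require Import all_boot all_order all_algebra.
From mathcomp Require Import reals complex.
From mathcomp Require Import ring zify.
Set Implicit Arguments. Unset Strict Implicit. Unset Printing Implicit Defensive.
Import GRing.Theory Num.Theory.
Local Open Scope ring_scope.


Lemma sum_trunc (V : nmodType) (a b : nat) (F : nat -> V) :
  (a <= b)%N -> (forall n, (a <= n)%N -> F n = 0) ->
  \sum_(n < b) F n = \sum_(n < a) F n.
Proof.
move=> ab F0; rewrite (big_ord_widen b F ab) [RHS]big_mkcond /=.
by apply: eq_bigr => i _; case: ifP => // /negbT; rewrite -leqNgt => /F0.
Qed.

Section S1.
Variable K : numFieldType.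
Variable A : K.

Definition T (M : nat) : {poly LP K} := ctrunc A M.
Definition gam (n : nat) : {poly LP K} := ((n`!%:R : K)^-1)%:P%:P%:P.
Definition Q (M N : nat) : {poly LP K} := \sum_(n < M.+1) gam n * (T N) ^+ n.

Lemma expo0 : expo A 0 = 0. Proof. by []. Qed.

Lemma coefT N i : (T N)`_i = if (i < N.+1)%N then expo A i else 0.
Proof. by rewrite /T /ctrunc coef_poly. Qed.

Lemma T0 N : (T N)`_0 = 0.
Proof. by rewrite coefT. Qed.

Lemma coefTX_low N n i : (i < n)%N -> ((T N) ^+ n)`_i = 0.
Proof.
elim: n i => [//|n IH] i lt; rewrite exprS coefM big1 // => j _.
case: (posnP j) => [->|jp]; first by rewrite T0 mul0r.
by rewrite IH ?mulr0 //; have := ltn_ord j; lia.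
Qed.

Lemma coefTX_eq N1 N2 n i : (i <= N1)%N -> (i <= N2)%N ->
  ((T N1) ^+ n)`_i = ((T N2) ^+ n)`_i.
Proof.
elim: n i => [|n IH] i l1 l2; first by rewrite !expr0.
rewrite !exprS !coefM; apply: eq_bigr => j _.
rewrite IH; try lia.
by rewrite !coefT !ifT //; have := ltn_ord j; lia.
Qed.

Lemma coef_gam n p i : (gam n * p)`_i = ((n`!%:R : K)^-1)%:P%:P * p`_i.
Proof. by rewrite coefCM. Qed.

Lemma coefQ M N i : (i <= M)%N -> (i <= N)%N -> (Q M N)`_i = c A i.
Proof.
move=> iM iN; rewrite /Q /c coef_sum.
rewrite (@sum_trunc _ i.+1 M.+1 (fun n => (gam n * T N ^+ n)`_i)) //; last first.
  by move=> n ni; rewrite coef_gam coefTX_low ?mulr0.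
rewrite coef_sum; apply: eq_bigr => n _.
rewrite !coef_gam; congr (_ * _); exact: coefTX_eq.
Qed.

Lemma gamS n : gam n.+1 *+ n.+1 = gam n.
Proof.
rewrite /gam -!rmorphMn /=; congr (_%:P%:P%:P).
rewrite factS natrM invfM -mulr_natr [_^-1 * _]mulrC -mulrA mulVf ?mulr1 //.
by rewrite pnatr_eq0.
Qed.

Lemma derivQ M N : (Q M.+1 N)^`() = Q M N * (T N)^`().
Proof.
rewrite /Q big_ord_recl /= expr0 mulr1 derivD {1}/gam derivC add0r.
rewrite raddf_sum mulr_suml; apply: eq_bigr => n _.
change ((gam n.+1 * T N ^+ n.+1)^`() = gam n * T N ^+ n * (T N)^`()); rewrite {1}/gam deriv_mulC deriv_exp -/(gam _) /= -[gam n]gamS mulrnAr !mulrnAl; congr (_ *+ _); ring.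
Qed.

Lemma crec k : c A k *+ k = \sum_(t < k.+1) (expo A t *+ t) * c A (k - t).
Proof.
case: k => [|k]; first by rewrite mulr0n big_ord1 mulr0n mul0r.
have -> : c A k.+1 *+ k.+1 = (Q k.+1 k.+1)^`()`_k by rewrite coef_deriv coefQ.
rewrite derivQ mulrC coefM [RHS]big_ord_recl /= mulr0n mul0r add0r.
apply: eq_bigr => j _; rewrite coef_deriv coefT ifT; last by have := ltn_ord j; lia.
rewrite /bump /= add1n subSS coefQ //; have := ltn_ord j; lia.
Qed.

Lemma c0 : c A 0 = 1.
Proof.
rewrite /c big_ord1 expr0 mulr1 /=.
by rewrite coefC /= invr1.
Qed.

End S1.


Section S3.
Variable K : numFieldType.
Variable A : K.

Definition yy : {poly K} := 1 + A%:P * 'X.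
Definition Dw (p : {poly K}) : {poly K} := - ('X + A%:P * 'X^2) * p^`().
Definition Phi (j : nat) : {poly K} := iter j Dw yy.
Definition Sig (k : nat) : {poly K} := \sum_(j < k) Phi j *+ 'C(k, j).

Lemma Dw_add p q : Dw (p + q) = Dw p + Dw q.
Proof. by rewrite /Dw derivD mulrDr. Qed.
Lemma Dw0 : Dw 0 = 0.
Proof. by rewrite /Dw deriv0 mulr0. Qed.
Lemma Dw_sum n (F : 'I_n -> {poly K}) : Dw (\sum_(i < n) F i) = \sum_(i < n) Dw (F i).
Proof. exact: (big_morph Dw Dw_add Dw0). Qed.
Lemma Dw_muln p m : Dw (p *+ m) = Dw p *+ m.
Proof. by rewrite /Dw derivMn mulrnAr. Qed.
Lemma Dw_mul p q : Dw (p * q) = Dw p * q + p * Dw q.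
Proof. rewrite /Dw derivM; ring. Qed.
Lemma Dw_yy : Dw yy = yy - yy * yy.
Proof.
rewrite /Dw /yy derivD derivC add0r deriv_mulC derivX mulr1.
ring.
Qed.

Lemma Sig_rec k : Sig k.+1 = Sig k + Phi k + Dw (Sig k).
Proof.
rewrite /Sig Dw_sum big_ord_recl /=.
under eq_bigr => i _ do rewrite /bump /= add1n binS mulrnDr.
rewrite big_split /= addrA; congr (_ + _); last first.
  by apply: eq_bigr => i _; rewrite Dw_muln.
have -> : \sum_(j<k) Phi j *+ 'C(k,j) + Phi k = \sum_(j < k.+1) Phi j *+ 'C(k,j).
  by rewrite big_ord_recr /= binn.
rewrite big_ord_recl /= !bin0; congr (_ + _).
Qed.

Lemma Dw_opp p : Dw (- p) = - Dw p.
Proof. by rewrite /Dw derivN mulrN. Qed.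

Lemma Phi_inv k : Phi k = yy - yy * Sig k.
Proof.
elim: k => [|k IH]; first by rewrite /Sig big_ord0 mulr0 subr0.
have e := Sig_rec k.
rewrite [Phi k.+1]/Phi iterS -/(Phi k) e {1}IH Dw_add Dw_opp Dw_mul Dw_yy IH.
set s := Sig k; set ds := Dw s; ring.
Qed.

Lemma binq i k : (i <= k)%N ->
  ((i`!)%:R : K)^-1 * (((k-i)`!)%:R)^-1 = ('C(k,i))%:R / (k`!)%:R.
Proof.
move=> ik; rewrite -(bin_fact ik) !natrM.
have h1 : ((i`!)%:R : K) != 0 by rewrite pnatr_eq0 -lt0n fact_gt0.
have h2 : (((k-i)`!)%:R : K) != 0 by rewrite pnatr_eq0 -lt0n fact_gt0.
have h3 : (('C(k,i))%:R : K) != 0 by rewrite pnatr_eq0 -lt0n bin_gt0.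
by rewrite invfM mulrA mulfV // mul1r invfM.
Qed.

Definition ga (a : K) (m : nat) : {poly K} :=
  if m is 0 then 1 else (a ^+ m / (m`!)%:R)%:P * yy.
Definition La (a : K) (i : nat) : {poly K} :=
  if i is 0 then 0 else (a ^+ i / (i`!)%:R)%:P * Phi i.-1.

Lemma test (x y : K) (p : {poly K}) : (x * y)%:P * p = x%:P * (y%:P * p).
Proof. ring. Qed.

Lemma gaS a m : (0 < m)%N -> ga a m = (a ^+ m / (m`!)%:R)%:P * yy.
Proof. by case: m. Qed.

Lemma scS a i (p : {poly K}) :
  (a ^+ i.+1 / ((i.+1)`!)%:R)%:P * p *+ i.+1 = (a ^+ i.+1 / (i`!)%:R)%:P * p.
Proof.
have h : ((i.+1)%:R : K) != 0 by rewrite pnatr_eq0.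
have -> : a ^+ i.+1 / ((i.+1)`!)%:R = a ^+ i.+1 / (i`!)%:R / (i.+1)%:R.
  by rewrite factS natrM invfM [_^-1 * _]mulrC mulrA.
rewrite -mulr_natr; transitivity (((a ^+ i.+1 / (i`!)%:R) / (i.+1)%:R * (i.+1)%:R)%:P * p); first ring.
by rewrite mulfVK.
Qed.

Lemma ga_id a m : ga a m *+ m = \sum_(i < m.+1) (La a i *+ i) * ga a (m - i).
Proof.
case: m => [|k]; first by rewrite mulr0n big_ord1 mulr0n mul0r.
rewrite big_ord_recl /= mulr0n mul0r add0r.
under eq_bigr => i _ do rewrite /bump /= add1n subSS.
rewrite big_ord_recr /= subnn mulr1 !scS.
have -> : (a ^+ k.+1 / (k`!)%:R)%:P * yy = (a ^+ k.+1 / (k`!)%:R)%:P * (Phi k + yy * Sig k).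
  by rewrite [Phi k]Phi_inv subrK.
rewrite mulrDr addrC; congr (_ + _).
rewrite /Sig mulr_sumr mulr_sumr; apply: eq_bigr => i _.
rewrite scS add0n gaS; last by have := ltn_ord i; lia.
symmetry.
have sc : a ^+ i.+1 / (i`!)%:R * (a ^+ (k - i) / ((k - i)`!)%:R)
          = a ^+ k.+1 / (k`!)%:R * ('C(k, i))%:R.
  rewrite mulrACA binq; last by have := ltn_ord i; lia.
  rewrite -exprD; have -> : (i.+1 + (k - i) = k.+1)%N by have := ltn_ord i; lia.
  by rewrite mulrA mulrAC.
transitivity ((a ^+ i.+1 / (i`!)%:R * (a ^+ (k - i) / ((k - i)`!)%:R))%:P * (Phi i * yy)); first ring.
rewrite sc; ring.
Qed.

Definition tr N (f : nat -> {poly K}) : {poly {poly K}} := \poly_(i < N.+1) f i.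
Definition th (p : {poly {poly K}}) := 'X * p^`().
Definition eqN N (p q : {poly {poly K}}) := forall i, (i <= N)%N -> p`_i = q`_i.
Definition Solv N l p := eqN N (th p) (th l * p).

Lemma coef_th p i : (th p)`_i = p`_i *+ i.
Proof. by rewrite /th coefXM; case: i => [|i] //=; rewrite coef_deriv. Qed.

Lemma eqN_mulr N p p' q : eqN N p p' -> eqN N (p * q) (p' * q).
Proof.
move=> h i iN; rewrite !coefM; apply: eq_bigr => j _; rewrite h //.
by have := ltn_ord j; lia.
Qed.

Lemma th_mul p q : th (p * q) = th p * q + p * th q.
Proof. by rewrite /th derivM; ring. Qed.

Lemma Solv_mul N l1 p l2 q : Solv N l1 p -> Solv N l2 q -> Solv N (l1 + l2) (p * q).
Proof.
move=> h1 h2 i iN; rewrite th_mul coefD (eqN_mulr q h1 iN) [p * th q]mulrC.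
rewrite (eqN_mulr p h2 iN) -coefD.
have -> : th (l1 + l2) * (p * q) = th l1 * p * q + th l2 * q * p by rewrite /th derivD; ring.
by [].
Qed.

Lemma Solv_ga N a : Solv N (tr N (La a)) (tr N (ga a)).
Proof.
move=> i iN; rewrite coef_th coefM /tr coef_poly ifT // ga_id.
apply: eq_bigr => j _; rewrite coef_th !coef_poly !ifT //.
  by have := ltn_ord j; lia.
by have := ltn_ord j; lia.
Qed.

Lemma Solv_prod N n (a : nat -> K) :
  Solv N (\sum_(s < n) tr N (La (a s))) (\prod_(s < n) tr N (ga (a s))).
Proof.
elim: n => [|n IH].
  by move=> i _; rewrite !big_ord0 /th derivC deriv0 !(mulr0, mul0r).
rewrite !big_ord_recr /=; exact: Solv_mul IH (@Solv_ga N (a n)).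
Qed.

Lemma Solv_rec N l p i : Solv N l p -> (i <= N)%N ->
  p`_i *+ i = \sum_(j < i.+1) (l`_j *+ j) * p`_(i - j).
Proof.
move=> h iN; rewrite -coef_th h // coefM; apply: eq_bigr => j _.
by rewrite coef_th.
Qed.

Definition wdeg d (p : {poly {poly K}}) := forall i, leq (size p`_i) d.+1.

Lemma wdeg_mul d1 d2 p q : wdeg d1 p -> wdeg d2 q -> wdeg (d1 + d2) (p * q).
Proof.
move=> hp hq i; rewrite coefM; apply: (big_ind (fun x : {poly K} => (size x <= (d1 + d2).+1)%N)).
- by rewrite size_poly0.
- move=> x y hx hy; apply: leq_trans (size_polyD _ _) _; by rewrite geq_max hx hy.
- move=> j _; apply: leq_trans (size_polyMleq _ _) _.
  by have := hp j; have := hq (i - j)%N; lia.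
Qed.

Lemma size_yy : (size yy <= 2)%N.
Proof.
rewrite /yy; apply: leq_trans (size_polyD _ _) _; rewrite geq_max size_poly1 /=.
apply: leq_trans (size_polyMleq _ _) _; rewrite size_polyX size_polyC.
by case: (A != 0).
Qed.

Lemma wdeg_ga N a : wdeg 1 (tr N (ga a)).
Proof.
move=> i; rewrite /tr coef_poly; case: ifP => _; last by rewrite size_poly0.
case: i => [|i]; first by rewrite /= size_poly1.
rewrite /=; apply: leq_trans (size_polyMleq _ _) _; rewrite size_polyC.
by have := size_yy; case: (_ != 0); lia.
Qed.

Lemma wdeg_prod N n (a : nat -> K) : wdeg n (\prod_(s < n) tr N (ga (a s))).
Proof.
elim: n => [|n IH].
  by move=> i; rewrite big_ord0 coef1; case: (i == 0)%N; rewrite ?size_poly1 ?size_poly0.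
rewrite big_ord_recr /= -addn1; exact: wdeg_mul (wdeg_ga _ _).
Qed.
End S3.


Section S6.
Variable K : numFieldType.

Lemma size_qseq j : size (qseq K j) = j.+1.
Proof. by elim: j => [|j IH] //=; rewrite size_rcons IH. Qed.

Lemma nth_qseq j i : (i <= j)%N -> nth 0 (qseq K j) i = qS K i.
Proof.
elim: j i => [|j IH] i ij; first by have -> : i = 0%N by lia.
rewrite /= nth_rcons size_qseq; case: ltnP => h; first by rewrite IH // /qS.
have -> : i = j.+1 by lia.
by rewrite eqxx /qS /= nth_rcons size_qseq ltnn eqxx.
Qed.

Lemma sS0 : sS K 0 = 1.
Proof. by rewrite /sS /= invr1. Qed.

Lemma qS_rec j : \sum_(i < j.+1) sS K i *: qS K (j - i) = sS K j *: 'X^(2 * j).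
Proof.
case: j => [|j]; first by rewrite big_ord1 /qS /= sS0 !scale1r.
rewrite big_ord_recl /= sS0 scale1r subn0.
have -> : qS K j.+1 = sS K j.+1 *: 'X^(2 * j.+1)
    - \sum_(1 <= i < j.+2) sS K i *: nth 0 (qseq K j) (j.+1 - i).
  by rewrite /qS /= nth_rcons size_qseq ltnn eqxx.
rewrite big_add1 /= big_mkord -addrA addrC -addrA [X in _ + X]addrC.
have E : \sum_(i < j.+1) sS K (bump 0 i) *: qS K (j.+1 - bump 0 i)
  = \sum_(i < j.+1) sS K i.+1 *: (qseq K j)`_(j.+1 - i.+1).
  apply: eq_bigr => i _; rewrite /bump /= add1n nth_qseq //; lia.
rewrite E; set S := \sum_(i < j.+1) _; set T := sS K j.+1 *: _; ring.
Qed.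


Lemma binq6 i k : (i <= k)%N ->
  ((i`!)%:R : K)^-1 * (((k-i)`!)%:R)^-1 = ('C(k,i))%:R / (k`!)%:R.
Proof.
move=> ik; rewrite -(bin_fact ik) !natrM.
have h3 : (('C(k,i))%:R : K) != 0 by rewrite pnatr_eq0 -lt0n bin_gt0.
by rewrite invfM mulrA mulfV // mul1r invfM.
Qed.

Definition hh : K := 2^-1.
Lemma two_nz : (2 : K) != 0. Proof. by rewrite pnatr_eq0. Qed.
Lemma hh2 : hh * 2 = 1. Proof. by rewrite /hh mulVf // two_nz. Qed.

Definition aa n s : K := (n%:R - 1) * hh - s%:R.
Definition SA n i := \sum_(s < n) aa n s ^+ i.

Lemma SA_odd n i : odd i -> SA n i = 0.
Proof.
move=> oi; have e : SA n i = - SA n i.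
  rewrite {1}/SA (reindex_inj rev_ord_inj) /= -sumrN; apply: eq_bigr => s _.
  have -> : aa n (n - s.+1) = - aa n s.
    rewrite /aa natrB; last by have := ltn_ord s; lia.
    transitivity (- ((n%:R - 1) * hh - s%:R) + ((n%:R - 1) * (hh * 2) - (n%:R - 1))); last by rewrite hh2 mulr1 subrr addr0.
    ring.
  by rewrite exprNn -signr_odd oi expr1 mulN1r.
have : SA n i *+ 2 == 0 by rewrite mulr2n {1}e addNr.
by rewrite mulrn_eq0 /= => /eqP.
Qed.


Definition cS i : K := (hh ^+ i.+1 - (- hh) ^+ i.+1) / ((i.+1)`!)%:R.

Lemma cS_id a m : \sum_(i < m.+1) cS i * (a ^+ (m - i) / ((m - i)`!)%:R)
  = ((a + hh) ^+ m.+1 - (a - hh) ^+ m.+1) / ((m.+1)`!)%:R.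
Proof.
rewrite !exprDn -sumrB [X in _ = X / _]big_ord_recl /= !expr0 mulr1 subrr add0r.
rewrite mulr_suml; apply: eq_bigr => i _.
rewrite /bump /= add1n subSS /cS.
have ci : ((i.+1)`!%:R : K)^-1 * ((m - i)`!%:R)^-1 = 'C(m.+1, i.+1)%:R / (m.+1)`!%:R.
  by rewrite -(binq6 (k := m.+1)) ?subSS //; have := ltn_ord i; lia.
transitivity ((hh ^+ i.+1 - (- hh) ^+ i.+1) * a ^+ (m - i) * (((i.+1)`!%:R : K)^-1 * ((m - i)`!%:R)^-1)); first ring.
by rewrite ci; ring.
Qed.


Lemma SA_rec n m : \sum_(i < m.+1) cS i * (SA n (m - i) / ((m - i)`!)%:R)
  = ((n%:R * hh) ^+ m.+1 - (- (n%:R * hh)) ^+ m.+1) / ((m.+1)`!)%:R.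
Proof.
rewrite /SA.
under eq_bigr => i _ do rewrite mulr_suml mulr_sumr.
rewrite exchange_big /=.
under eq_bigr => s _ do rewrite cS_id.
rewrite -mulr_suml; congr (_ / _).
set f := fun t : nat => (n%:R * hh - t%:R) ^+ m.+1.
have -> : \sum_(s < n) ((aa n s + hh) ^+ m.+1 - (aa n s - hh) ^+ m.+1)
    = \sum_(0 <= s < n) - (f s.+1 - f s).
  rewrite big_mkord; apply: eq_bigr => s _; rewrite /f opprB.
  congr (_ ^+ _ - _ ^+ _); rewrite /aa; first ring.
  rewrite -addn1 natrD; transitivity (n%:R * hh - (s%:R + hh * 2)); first ring.
  by rewrite hh2.
rewrite sumrN telescope_sumr // opprB /f subr0.
congr (_ - _ ^+ _).
transitivity (n%:R * hh - n%:R * (hh * 2)); first by rewrite hh2 mulr1.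
ring.
Qed.


Lemma sS_h t : sS K t = hh ^+ (2 * t).+1 *+ 2 / (((2 * t).+1)`!)%:R.
Proof.
have e4 : (4%:R : K)^-1 = hh * hh by rewrite /hh -invfM -natrM.
rewrite /sS natrM natrX invfM -exprVn e4 -expr2 -exprM.
by rewrite exprSr -mulrnAr -[hh *+ 2]mulr_natr hh2 mulr1.
Qed.

Lemma cS_odd t : cS (2 * t).+1 = 0.
Proof.
have o : odd (2 * t).+2 = false by rewrite /= negbK oddM.
by rewrite /cS exprNn -signr_odd o expr0 mul1r subrr mul0r.
Qed.

Lemma cS_even t : cS (2 * t) = sS K t.
Proof.
have o : odd (2 * t).+1 = true by rewrite /= oddM.
rewrite /cS sS_h exprNn -signr_odd o expr1 mulN1r opprK.
by rewrite mulr2n.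
Qed.

End S6.

Lemma sum_even (V : zmodType) (F : nat -> V) k :
  (forall j, odd j -> F j = 0) ->
  \sum_(j < (2 * k).+1) F j = \sum_(t < k.+1) F (2 * t)%N.
Proof.
move=> h; elim: k => [|k IH]; first by rewrite muln0 !big_ord1.
have -> : (2 * k.+1).+1 = (2 * k).+3 by lia.
rewrite (big_ord_recr (2*k).+2) (big_ord_recr (2*k).+1) /= IH h ?addr0; last by rewrite /= oddM.
rewrite [RHS]big_ord_recr /=.
by have -> : (2 * k).+2 = (2 * k.+1)%N by lia.
Qed.

Section S7.
Variable K : numFieldType.

Definition Qp n j : K := SA K n (2 * j) / (((2 * j)`!)%:R).
Definition rr n j : K := n%:R * (qS K j).[n%:R].

Lemma Q_rec n j : \sum_(t < j.+1) sS K t * Qp n (j - t) = sS K j * n%:R ^+ (2 * j).+1.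
Proof.
transitivity (\sum_(t < j.+1) cS K (2 * t) * (SA K n (2 * j - 2 * t) / ((2 * j - 2 * t)`!)%:R)).
  by apply: eq_bigr => t _; rewrite cS_even /Qp mulnBr.
rewrite -(@sum_even _ (fun i => cS K i * (SA K n (2 * j - i) / ((2 * j - i)`!)%:R)) j); last first.
  move=> i oi; have -> : i = (2 * i./2).+1.
    by rewrite -[i in LHS]odd_double_half oi -mul2n.
  by rewrite cS_odd mul0r.
have o : odd (2 * j).+1 = true by rewrite /= oddM.
rewrite SA_rec exprNn -signr_odd o expr1 mulN1r opprK sS_h exprMn; ring.
Qed.

Lemma r_rec n j : \sum_(t < j.+1) sS K t * rr n (j - t) = sS K j * n%:R ^+ (2 * j).+1.
Proof.
have := congr1 (fun p => n%:R * p.[n%:R]) (qS_rec K j).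
rewrite /= horner_sum hornerZ hornerXn mulr_sumr => e.
transitivity (\sum_(i < j.+1) n%:R * (sS K i *: qS K (j - i)).[n%:R]).
  by apply: eq_bigr => i _; rewrite hornerZ /rr; ring.
by rewrite e exprS; ring.
Qed.

Lemma r_eq n j : rr n j = Qp n j.
Proof.
elim: j {-2}j (leqnn j) => [|M IH] j jM.
  have -> : j = 0%N by lia.
  by have := r_rec n 0; have := Q_rec n 0; rewrite !big_ord1 sS0 !mul1r => -> ->.
have := r_rec n j; have := Q_rec n j.
rewrite !big_ord_recl sS0 !mul1r !subn0 => e1 e2.
have : rr n j = sS K j * n%:R ^+ (2 * j).+1 - \sum_(i < j) sS K (bump 0 i) * rr n (j - bump 0 i).
  by rewrite -e2 addrK.
move=> ->; rewrite -e1 (_ : \sum_(i < j) sS K (bump 0 i) * rr n (j - bump 0 i) = \sum_(i < j) sS K (bump 0 i) * Qp n (j - bump 0 i)) ?addrK //.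
apply: eq_bigr => i _; rewrite IH //; have := ltn_ord i; rewrite /bump /=; lia.
Qed.

End S7.


Section S8.
Variable K : numFieldType.
Variable A : K.

Definition ev (x : K) (p : LP K) : {poly K} := map_poly (horner_eval x) p.

Lemma ev_M x p q : ev x (p * q) = ev x p * ev x q. Proof. by rewrite /ev rmorphM. Qed.
Lemma ev_D x p q : ev x (p + q) = ev x p + ev x q. Proof. by rewrite /ev rmorphD. Qed.
Lemma ev_N x p : ev x (- p) = - ev x p. Proof. by rewrite /ev rmorphN. Qed.
Lemma ev_1 x : ev x 1 = 1. Proof. by rewrite /ev rmorph1. Qed.
Lemma ev_0 x : ev x 0 = 0. Proof. by rewrite /ev rmorph0. Qed.
Lemma ev_X x : ev x 'X = 'X. Proof. by rewrite /ev map_polyX. Qed.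
Lemma ev_C x (q : {poly K}) : ev x q%:P = (q.[x])%:P. Proof. by rewrite /ev map_polyC. Qed.
Lemma ev_Xn x n : ev x ('X^n : LP K) = 'X^n. Proof. by elim: n => [|n IH]; rewrite ?expr0 ?ev_1 // !exprS ev_M ev_X IH. Qed.
Lemma ev_deriv x p : ev x (p^`()) = (ev x p)^`().
Proof. by rewrite /ev; apply/esym; apply: (deriv_map (horner_eval x)). Qed.
Lemma ev_Mn x p k : ev x (p *+ k) = ev x p *+ k. Proof. by rewrite /ev rmorphMn. Qed.
Lemma ev_sum x n (F : 'I_n -> LP K) : ev x (\sum_(i < n) F i) = \sum_(i < n) ev x (F i).
Proof. by rewrite /ev rmorph_sum. Qed.

Lemma ev_zdz x p : ev x (zdz A p) = Dw A (ev x p).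
Proof. by rewrite /zdz /Dw ev_M ev_N ev_D ev_M ev_X ev_Xn ev_C hornerC ev_deriv. Qed.

Lemma ev_Dlog x m : ev x (Dlog A m.+1) = Phi A m.
Proof.
rewrite /Dlog /Phi /=; elim: m => [|m IH].
  by rewrite /= ev_D ev_1 ev_M ev_X ev_C hornerC.
by rewrite !iterS ev_zdz IH.
Qed.

Lemma ev_Dlog' x m : (0 < m)%N -> ev x (Dlog A m) = Phi A m.-1.
Proof. by case: m => // m _; rewrite ev_Dlog. Qed.

Lemma ev_expo x j : ev x (expo A j.+1) = (x * (qS K j.+1).[x])%:P * Phi A (2 * j).+1.
Proof.
rewrite [expo A j.+1]/expo !ev_M (ev_Dlog' x (m := 2 * j.+1)) //.
have -> : (2 * j.+1).-1 = (2 * j).+1 by lia.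
by rewrite !ev_C hornerX polyCM.
Qed.

Lemma ev_crec x k : ev x (c A k) *+ k
  = \sum_(t < k.+1) (ev x (expo A t) *+ t) * ev x (c A (k - t)).
Proof.
rewrite -ev_Mn crec ev_sum; apply: eq_bigr => t _.
by rewrite ev_M ev_Mn.
Qed.

Lemma mulrn_cancel (p q : {poly K}) k : (0 < k)%N -> p *+ k = q *+ k -> p = q.
Proof.
move=> kp e; have : ((k%:R : K)^-1) *: (p *+ k) = ((k%:R : K)^-1) *: (q *+ k) by rewrite e.
rewrite -!scaler_nat !scalerA mulVf ?scale1r //.
by rewrite pnatr_eq0 -lt0n.
Qed.

End S8.


Section S9.
Variable K : numFieldType.
Variable A : K.

Lemma qS_rec_ev x j : \sum_(i < j.+1) sS K i * (qS K (j - i)).[x] = sS K j * x ^+ (2 * j).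
Proof.
have := congr1 (fun p => p.[x]) (qS_rec K j); rewrite /= horner_sum hornerZ hornerXn => <-.
by apply: eq_bigr => i _; rewrite hornerZ.
Qed.

Lemma qS0 : qS K 0 = 1. Proof. by []. Qed.

Lemma qS_m1 J : (qS K J.+1).[-1] = 0.
Proof.
elim: J {-2}J (leqnn J) => [|M IH] J JM.
  have -> : J = 0%N by lia.
  have := qS_rec_ev (-1) 1; rewrite !big_ord_recl big_ord0 /= sS0 mul1r qS0 hornerC.
  rewrite /bump /= subn0 exprM sqrrN !expr1n !mulr1 addr0 => e.
  by apply: (addIr (sS K 1)); rewrite add0r.
have := qS_rec_ev (-1) J.+1; rewrite big_ord_recl /= sS0 mul1r subn0.
rewrite exprM sqrrN expr1n expr1n mulr1 big_ord_recr /= subnn qS0 hornerC mulr1.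
rewrite big1 ?add0r => [e|i _].
  by apply: (addIr (sS K J.+1)); rewrite add0r.
have -> : (J.+1 - bump 0 (widen_ord (leqnSn J) i) = (J - i.+1).+1)%N.
  by rewrite /bump /=; have := ltn_ord i; lia.
by rewrite IH ?mulr0 //; have := ltn_ord i; have := JM; lia.
Qed.

Lemma root_m1 k : (0 < k)%N -> ev (-1) (c A k) = 0.
Proof.
move=> kp; apply: (mulrn_cancel kp); rewrite mul0rn ev_crec big1 // => t _.
case: (nat_of_ord t) => [|t']; first by rewrite mulr0n mul0r.
by rewrite ev_expo qS_m1 mulr0 mul0r mul0rn mul0r.
Qed.

Definition Pn N n := \prod_(s < n) tr N (ga A (aa K n s)).
Definition lc x j := if odd j then 0 else ev x (expo A j./2).
Definition Cn x m := if odd m then 0 else ev x (c A m./2).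

Lemma ell_eq n j : \sum_(s < n) La A (aa K n s) j = lc n%:R j.
Proof.
case: j => [|i]; first by rewrite /lc /= big1 // ev_0.
rewrite /La -mulr_suml -rmorph_sum -mulr_suml /lc.
case: ifP => oi.
  by rewrite -/(SA K n i.+1) SA_odd // mul0r rmorph0 mul0r.
have : exists j, i.+1 = (2 * j.+1)%N.
  exists (i.+1./2).-1; have := odd_double_half i.+1; rewrite oi /= add0n.
  by case: (i.+1./2) => [|q] //=; lia.
case=> j e; rewrite e (_ : (2 * j.+1)./2 = j.+1); last by rewrite -[RHS]doubleK -mul2n.
rewrite ev_expo; have -> : (2 * j.+1).-1 = (2 * j).+1 by lia.
by rewrite -/(rr K n j.+1) r_eq.
Qed.

Lemma half_double t : ((2 * t)./2 = t)%N.
Proof. by rewrite mul2n doubleK. Qed.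
Lemma odd2 t : odd (2 * t) = false.
Proof. by rewrite oddM. Qed.

Lemma C_rec x m : Cn x m *+ m = \sum_(j < m.+1) (lc x j *+ j) * Cn x (m - j).
Proof.
case: (boolP (odd m)) => om.
  rewrite [Cn x m]/Cn om mul0rn; apply/esym; apply: big1 => j _.
  rewrite /lc /Cn; case: ifP => oj; first by rewrite mul0rn mul0r.
  by rewrite oddB ?om ?oj ?mulr0 //; have := ltn_ord j; lia.
have e : m = (2 * m./2)%N.
  by have := odd_double_half m; rewrite (negbTE om) add0n -mul2n.
move: (m./2) e => k ->.
rewrite (@sum_even _ (fun j => (lc x j *+ j) * Cn x (2 * k - j)) k); last first.
  by move=> j oj; rewrite /lc oj mul0rn mul0r.
rewrite [Cn x (2 * k)]/Cn odd2 half_double.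
have -> : ev x (c A k) *+ (2 * k) = (ev x (c A k) *+ k) *+ 2 by rewrite mulnC mulrnA.
rewrite ev_crec -sumrMnl; apply: eq_bigr => t _.
rewrite /lc /Cn odd2 half_double -mulnBr odd2 half_double.
by rewrite -mulrnAl -mulrnA mulnC.
Qed.

Lemma P_rec N n m : (m <= N)%N ->
  (Pn N n)`_m *+ m = \sum_(j < m.+1) (lc n%:R j *+ j) * (Pn N n)`_(m - j).
Proof.
move=> mN; rewrite /Pn (Solv_rec (@Solv_prod K A N n (aa K n)) mN).
apply: eq_bigr => j _; rewrite coef_sum.
rewrite (eq_bigr (fun s : 'I_n => La A (aa K n s) j)) ?ell_eq // => s _.
by rewrite /tr coef_poly ifT //; have := ltn_ord j; lia.
Qed.

Lemma P0g N (f : nat -> K) n : (\prod_(s < n) tr N (ga A (f s)))`_0 = 1.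
Proof.
elim: n => [|n IH]; first by rewrite big_ord0 coef1.
by rewrite big_ord_recr /= coef0M IH /tr coef_poly /= mul1r.
Qed.

Lemma PC N n m : (m <= N)%N -> (Pn N n)`_m = Cn n%:R m.
Proof.
elim: m {-2}m (leqnn m) => [|M IH] m mM mN.
  have -> : m = 0%N by lia.
  by rewrite /Pn P0g /Cn /= c0 ev_1.
case: (posnP m) => [->|mp]; first by rewrite /Pn P0g /Cn /= c0 ev_1.
apply: (mulrn_cancel mp); rewrite P_rec // C_rec; apply: eq_bigr => j _.
case: (posnP j) => [->|jp]; first by rewrite !mulr0n !mul0r.
by rewrite IH //; have := ltn_ord j; lia.
Qed.

Lemma root_nat n k l : (0 < k)%N -> (n < l)%N -> ((c A k)`_l).[n%:R] = 0.
Proof.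
move=> kp nl.
have -> : ((c A k)`_l).[n%:R] = (ev n%:R (c A k))`_l by rewrite /ev coef_map.
have -> : ev n%:R (c A k) = Cn n%:R (2 * k) by rewrite /Cn odd2 half_double.
rewrite -(PC n (leqnn (2 * k))) nth_default //.
apply: leq_trans (@wdeg_prod K A (2 * k) n (aa K n) (2 * k)) _; exact: nl.
Qed.

End S9.

Unset Implicit Arguments.

Theorem lemma4p2 (R : realType) (A : R[i]) :
  c A 0 = 1 /\
  forall k l : nat, (0 < k)%N -> (0 < l)%N ->
    exists p : {poly R[i]}, d A k l = fallprod R[i] l * p.
Proof.
split; first exact: c0.
move=> k l kp lp.
pose rs := [seq ((i%:R : R[i]) - 1) | i <- iota 0 l.+1].
have hall : all (root (d A k l)) rs.
  apply/allP => z /mapP [j]; rewrite mem_iota add0n => /andP [_ jl] ->.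
  rewrite /root /d; apply/eqP.
  case: j jl => [|j] jl.
    rewrite sub0r.
    have -> : ((c A k)`_l).[-1] = (ev (-1) (c A k))`_l by rewrite /ev coef_map.
    by rewrite root_m1 // coef0.
  rewrite -addn1 natrD addrK; apply: root_nat => //; lia.
have hu : uniq_roots rs.
  rewrite uniq_rootsE map_inj_uniq ?iota_uniq // => a b /addIr /eqP.
  by rewrite eqr_nat => /eqP.
have [q e] := uniq_roots_prod_XsubC hall hu.
exists q; rewrite e mulrC /fallprod big_map.
by rewrite -(big_mkord xpredT (fun i => 'X - (i%:R - 1)%:P)) /index_iota subn0.
Qed.
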